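(* Let $m\ge1$, real $p,q$ with $p\wedge q>m-1$, $r=p-m$, $s=q-m$, and let $x_1(t),\dots,x_m(t)$ be the roots of the averaged characteristic polynomial $\chi_t^{(r,s,m)}$ of the Jacobi eigenvalue process (started at a deterministic point of $[0,1]^m$). Let $m_\ell(t)=\frac1m\sum_{i=1}^mx_i(t)^\ell$, $\ell\ge0$ (so $m_0=1$). Then for $t>0$ $$\frac{d}{dt}m_1(t)=p-(p+q)m_1(t),$$ and for every $\ell\ge2$, $$\frac{d}{dt}m_\ell(t)=-\ell(p+q-\ell+1)m_\ell(t)+\ell(p-\ell+1)m_{\ell-1}(t)+m\ell\sum_{k=0}^{\ell-2}\big(m_k(t)-m_{k+1}(t)\big)m_{\ell-1-k}(t).$$
   Context: The Jacobi eigenvalue process solves $d\lambda_t^i=\sqrt{2\lambda_t^i(1-\lambda_t^i)}dB_t^i+[p-(p+q)\lambda_t^i+\sum_{j\ne i}\frac{\lambda_t^i(1-\lambda_t^j)+\lambda_t^j(1-\lambda_t^i)}{\lambda_t^i-\lambda_t^j}]dt$ with independent Brownian motions; $\chi_t^{(r,s,m)}(x)=\mathbb E\prod_i(x-\lambda_t^i)$. Its roots are real, lie in $(0,1)$ for $t>0$, and (suitably indexed) satisfy $\dot x_j=p-(p+q)x_j+\sum_{k\ne j}\frac{x_j(1-x_k)+x_k(1-x_j)}{x_j-x_k}$. *)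

(* Defs.v *)
From HB Require Import structures.
From mathcomp Require Import all_boot all_order all_algebra.
From mathcomp Require Import all_classical all_reals all_analysis.
Set Implicit Arguments. Unset Strict Implicit. Unset Printing Implicit Defensive.
Import Order.TTheory GRing.Theory Num.Theory.
Local Open Scope ring_scope.

(* Drift of the root ODE for the averaged characteristic polynomial of the
   Jacobi eigenvalue process:
   p - (p+q) x_j + sum_{k<>j} (x_j(1-x_k) + x_k(1-x_j)) / (x_j - x_k). *)
Definition jacobi_root_drift (R : realType) (m : nat) (p q : R)
  (y : 'I_m -> R) (j : 'I_m) : R :=
  p - (p + q) * y j
  + \sum_(k < m | k != j) (y j * (1 - y k) + y k * (1 - y j)) / (y j - y k).

Definition root_moment (R : realType) (m : nat) (x : 'I_m -> R -> R)
  (l : nat) (t : R) : R :=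
  (m%:R)^-1 * \sum_(i < m) (x i t) ^+ l.

(* Main.v *)
From HB Require Import structures.
From mathcomp Require Import all_boot all_order all_algebra.
From mathcomp Require Import all_classical all_reals all_analysis.
From mathcomp Require Import ring lra zify.
Require Import Defs.
Import Order.TTheory GRing.Theory Num.Theory.
Local Open Scope ring_scope.

Section Key.
Variables (R : realType) (m : nat) (y : 'I_m -> R).
Hypothesis hy : forall i j : 'I_m, i != j -> y i != y j.

Let s (a : nat) : R := \sum_(i < m) y i ^+ a.
Let g (j k : 'I_m) : R := y j * (1 - y k) + y k * (1 - y j).
Let F (n : nat) (j k : 'I_m) : R := y j ^+ n * (g j k / (y j - y k)).
Let H (n : nat) (j k : 'I_m) : R := \sum_(i < n) y j ^+ (n.-1 - i) * y k ^+ i.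

Lemma ss_prod a b : \sum_(j < m) \sum_(k < m) y j ^+ a * y k ^+ b = s a * s b.
Proof. by rewrite /s big_distrl; apply: eq_bigr => j _; rewrite big_distrr. Qed.

Lemma Fpair n j k : F n j k + F n k j =
  H n j k * g j k - (j == k)%:R * (2 * n%:R * (y j ^+ n - y j ^+ n.+1)).
Proof.
have [->|njk] := eqVneq j k.
  rewrite /F subrr invr0 !mulr0 addr0 mul1r /H.
  have -> : \sum_(i < n) y k ^+ (n.-1 - i) * y k ^+ i = n%:R * y k ^+ n.-1.
    rewrite (eq_bigr (fun _ => y k ^+ n.-1)); last first.
      move=> i _; rewrite -exprD subnK //.
      by case: (n) i => [[]|n' [i hi]].
    by rewrite sumr_const card_ord mulr_natl.

  by rewrite /g; case: n => [|n] /=; rewrite ?exprS; ring.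
rewrite mul0r subr0.
have e := subrXX (y j) (y k) n.
have nz : y j - y k != 0 by rewrite subr_eq0 hy.
have nz' : y k - y j != 0 by rewrite subr_eq0 eq_sym hy.
have e2 : y j ^+ n = y k ^+ n + (y j - y k) * H n j k.
  by rewrite /H -e; ring.
rewrite /F /g e2; field.
by rewrite nz nz'.
Qed.

Lemma key n :
  \sum_(j < m) y j ^+ n *
     (\sum_(k < m | k != j) (y j * (1 - y k) + y k * (1 - y j)) / (y j - y k))
  = \sum_(i < n) (s i - s i.+1) * s (n - i) - n%:R * (s n - s n.+1).
Proof.
set B := LHS.
have hB : B = \sum_(j < m) \sum_(k < m) F n j k.
  rewrite /B; apply: eq_bigr => j _.
  rewrite big_distrr /= [in RHS](bigD1 j) //= /F subrr invr0 !mulr0 add0r.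
  by [].
have h2 : 2 * B = \sum_(j < m) \sum_(k < m) (F n j k + F n k j).
  have hB' : B = \sum_(j < m) \sum_(k < m) F n k j by rewrite hB exchange_big.
  rewrite mulr2n mulrDl mul1r {1}hB hB' -big_split /=.
  by apply: eq_bigr => j _; rewrite -big_split.
have h3 : \sum_(j < m) \sum_(k < m) (F n j k + F n k j) =
   \sum_(j < m) \sum_(k < m) H n j k * g j k - 2 * n%:R * (s n - s n.+1).
  under eq_bigr => j _ do under eq_bigr => k _ do rewrite Fpair.
  rewrite /s -sumrB big_distrr /= -sumrB; apply: eq_bigr => j _.
  rewrite sumrB; congr (_ - _).
  rewrite (bigD1 j) //= eqxx mul1r big1 ?addr0 // => k /negbTE.
  by rewrite eq_sym => ->; rewrite mul0r.
have h4 : \sum_(j < m) \sum_(k < m) H n j k * g j k =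
   \sum_(i < n) (s (n - i) * s i + s (n.-1 - i) * s i.+1
                  - 2 * (s (n - i) * s i.+1)).
  have e : forall j k, H n j k * g j k = \sum_(i < n)
     (y j ^+ (n - i) * y k ^+ i + y j ^+ (n.-1 - i) * y k ^+ i.+1
       - 2 * (y j ^+ (n - i) * y k ^+ i.+1)).
    move=> j k; rewrite /H big_distrl /=; apply: eq_bigr => i _.
    have -> : (n - i = (n.-1 - i).+1)%N by case: (n) i => [[]|n' [i hi]] //=; lia.
    by rewrite /g !exprS; ring.
  under eq_bigr => j _ do under eq_bigr => k _ do rewrite e.
  under eq_bigr => j _ do rewrite exchange_big /=.
  rewrite exchange_big /=; apply: eq_bigr => i _.
  rewrite -!ss_prod big_distrr /= -!big_split /=.
  rewrite -sumrB; apply: eq_bigr => j _.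
  by rewrite -big_split /= big_distrr -sumrB.
have h5 : \sum_(i < n) s (n.-1 - i) * s i.+1 = \sum_(i < n) s (n - i) * s i.
  have e1 : \sum_(i < n.+1) s i * s (n - i) =
      s 0 * s n + \sum_(i < n) s i.+1 * s (n - i.+1).
    by rewrite big_ord_recl subn0.
  have e2 : \sum_(i < n.+1) s i * s (n - i) =
      \sum_(i < n) s i * s (n - i) + s n * s 0.
    by rewrite big_ord_recr subnn.
  have e3 : \sum_(i < n) s (n.-1 - i) * s i.+1 =
            \sum_(i < n) s i.+1 * s (n - i.+1).
    apply: eq_bigr => i _; rewrite mulrC; congr (_ * _); congr s.
    by case: (n) i => [[]|n' [i hi]] //=; lia.
  rewrite e3; under [RHS]eq_bigr => i _ do rewrite mulrC.
  apply: (@addrI _ (s 0 * s n)); rewrite -e1 e2 addrC mulrC //.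
apply: (@mulfI _ 2); first by rewrite pnatr_eq0.
rewrite h2 h3 h4 sumrB big_split /= h5 -mulr_sumr.
have -> : \sum_(i < n) (s i - s i.+1) * s (n - i) =
   \sum_(i < n) s (n - i) * s i - \sum_(i < n) s (n - i) * s i.+1.
  by rewrite -sumrB; apply: eq_bigr => i _; ring.
ring.
Qed.

End Key.

Lemma deriv_moment (R : realType) (m : nat) (x : 'I_m -> R -> R) (l : nat) (t : R)
  (d : 'I_m -> R) : (forall j, is_derive t 1 (x j) (d j)) ->
  is_derive t 1 (root_moment x l)
    (m%:R^-1 * \sum_(j < m) (l%:R * x j t ^+ l.-1) * d j).
Proof.
move=> hd.
have -> : root_moment x l = (m%:R^-1) \*: (\sum_(i < m) (x i ^+ l)).
  apply: funext => u; rewrite /root_moment [in RHS]fct_sumE /=.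
  by congr (_ * _); apply: eq_bigr => i _; rewrite exprfctE.
apply: is_derive_eq.
  idtac.
by congr (_ * _); apply: eq_bigr => i _.
Qed.

Lemma gen_id (R : realType) (m : nat) (p q : R) (y : 'I_m -> R) (n : nat) :
  m%:R != 0 :> R ->
  (forall i j : 'I_m, i != j -> y i != y j) ->
  let M a := m%:R^-1 * \sum_(i < m) y i ^+ a in
  m%:R^-1 * \sum_(j < m) (n.+1%:R * y j ^+ n) * jacobi_root_drift p q y j =
  - n.+1%:R * (p + q - n.+1%:R + 1) * M n.+1
  + n.+1%:R * (p - n.+1%:R + 1) * M n
  + m%:R * n.+1%:R * \sum_(0 <= k < n) (M k - M k.+1) * M (n - k)%N.
Proof.
move=> hm hy M.
set s := fun a => \sum_(i < m) y i ^+ a.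
have hk := @key R m y hy n.
rewrite /jacobi_root_drift.
have E : forall j, (n.+1%:R * y j ^+ n) * (p - (p + q) * y j +
   \sum_(k < m | k != j) (y j * (1 - y k) + y k * (1 - y j)) / (y j - y k)) =
   n.+1%:R * p * y j ^+ n - n.+1%:R * (p + q) * y j ^+ n.+1 + n.+1%:R *
   (y j ^+ n * \sum_(k < m | k != j) (y j * (1 - y k) + y k * (1 - y j)) / (y j - y k)).
  by move=> j; rewrite exprS; ring.
under eq_bigr => j _ do rewrite E.
rewrite !big_split /= sumrN -!mulr_sumr hk.
have -> : \sum_(0 <= k < n) (M k - M k.+1) * M (n - k)%N =
  m%:R^-1 * m%:R^-1 * \sum_(k < n) (s k - s k.+1) * s (n - k)%N.
  rewrite big_mkord mulr_sumr; apply: eq_bigr => k _; rewrite /M /s; ring.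
rewrite /M -/(s n) -/(s n.+1).
field. exact: hm.
Qed.

Theorem mainTheorem8 (R : realType) (m : nat) (p q : R)
  (x : 'I_m -> R -> R) :
  (1 <= m)%N ->
  (m%:R - 1 < p) -> (m%:R - 1 < q) ->
  (* for t > 0 the roots lie in (0,1) and are pairwise distinct *)
  (forall t : R, 0 < t -> forall i, 0 < x i t < 1) ->
  (forall t : R, 0 < t -> forall i j : 'I_m, i != j -> x i t != x j t) ->
  (* the roots solve the ODE system for t > 0 *)
  (forall t : R, 0 < t -> forall j,
      is_derive t 1 (x j) (jacobi_root_drift p q (fun i => x i t) j)) ->
  forall t : R, 0 < t ->
    is_derive t 1 (root_moment x 1) (p - (p + q) * root_moment x 1 t) /\
    (forall l : nat, (2 <= l)%N ->
      is_derive t 1 (root_moment x l)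
        (- l%:R * (p + q - l%:R + 1) * root_moment x l t
         + l%:R * (p - l%:R + 1) * root_moment x l.-1 t
         + m%:R * l%:R *
           \sum_(0 <= k < l.-1)
              (root_moment x k t - root_moment x k.+1 t)
                * root_moment x (l.-1 - k) t)).
Proof.
move=> m1 _ _ _ hdist hder t t0.
have hm : m%:R != 0 :> R by rewrite pnatr_eq0 -lt0n.
have G : forall n, is_derive t 1 (root_moment x n.+1)
  (- n.+1%:R * (p + q - n.+1%:R + 1) * root_moment x n.+1 t
   + n.+1%:R * (p - n.+1%:R + 1) * root_moment x n t
   + m%:R * n.+1%:R * \sum_(0 <= k < n)
        (root_moment x k t - root_moment x k.+1 t) * root_moment x (n - k) t).
  move=> n; apply: is_derive_eq; first exact: (@deriv_moment R m x n.+1 t _ (hder t t0)).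
  exact: (@gen_id R m p q (fun i => x i t) n hm (hdist t t0)).
split; last by case=> [|[|n]] //; move=> _; exact: (G n.+1).
apply: (is_derive_eq (G 0%N)).
have h0 : root_moment x 0 t = 1.
  rewrite /root_moment (eq_bigr (fun _ => 1)) => [|i _]; last by rewrite expr0.
  by rewrite sumr_const card_ord mulVf.
rewrite h0 big_geq //; ring.
Qed.
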